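(* Let $K=\mathbf R$ or $\mathbf C$, let $V$ be an $n$-dimensional $K$-vector space with nondegenerate symmetric bilinear forms $b_0,b_1$, and let $f=(b_0^\dagger)^{-1}b_1^\dagger$ have a single Jordan block, with eigenvalue $\lambda$. Let $\mathbf e$ be a basis of $V$ and $\varepsilon\in\mathfrak c$ with $[f]_{\mathbf e}=J_n(\lambda)$ and $[b_0]_{\mathbf e}=\varepsilon C_n$. Let $\mathbf v$ be a basis of $V$ and $\eta\in\mathfrak c$ such that, in the dual basis $\mathbf v^*$ of $V^*$, $[b_1^*]_{\mathbf v^*}=\eta C_n$ and $[b_0^*]_{\mathbf v^*}=\eta C_nJ_n(\lambda)$. Let $\Phi$ be the matrix with $\mathbf e=\mathbf v\Phi$. Then: (1) if $K=\mathbf R$, $\varepsilon\eta\lambda>0$; (2) up to sign, $$\Phi=\sqrt{\varepsilon\eta\lambda}\sum_{\ell=0}^{n}a_\ell\lambda^{-\ell}C_nN^\ell,$$ where $\sum_\ell a_\ell t^\ell$ is the Taylor series of $(1+t)^{1/2}$, i.e. $a_\ell=\prod_{j=0}^{\ell-1}(1/2-j)/\ell!$, and $\sqrt{\varepsilon\eta\lambda}$ is a square root of $\varepsilon\eta\lambda$.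
   Context: $\mathfrak c=\{\pm1\}$ if $K=\mathbf R$ and $\mathfrak c=\{1\}$ if $K=\mathbf C$. $b_i^\dagger\colon V\to V^*$, $b_i^\dagger(x)(y)=b_i(x,y)$. The forms $b_i^*$ on $V^*$ are defined by $(b_i^* )^\dagger=(b_i^\dagger)^{-1}$. $C_n=(\delta_{n+1,i+j})$ is the antidiagonal matrix, $N=(\delta_{i+1,j})$ the regular nilpotent matrix, and $J_n(\lambda)=\lambda\mathrm{Id}+N$. *)

(* Defs.v *)
From HB Require Import structures.
From mathcomp Require Import all_boot all_order all_algebra.
From mathcomp Require Import complex.
Set Implicit Arguments. Unset Strict Implicit. Unset Printing Implicit Defensive.
Import Order.TTheory GRing.Theory Num.Theory.
Local Open Scope ring_scope.

(* Coordinates: V = K^n (column vectors); a basis is an invertible matrix whose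
   columns are the basis vectors; a bilinear form b is given by its Gram matrix B
   in the standard basis, b(x,y) = x^T B y. *)

Section A10Defs.
Variable K : fieldType.
Variable n : nat.

(* C_n = (delta_{n+1,i+j}) (1-indexed), i.e. i + j = n - 1 (0-indexed) *)
Definition antidiag : 'M[K]_n := \matrix_(i < n, j < n) ((i + j == n.-1)%N)%:R.
Definition nilpN : 'M[K]_n := \matrix_(i < n, j < n) ((i.+1 == j)%N)%:R.
Definition jordan (lam : K) : 'M[K]_n := lam%:M + nilpN.

Definition gram (B P : 'M[K]_n) : 'M[K]_n := P^T *m B *m P.
(* matrix of f = (b0^dag)^{-1} b1^dag in the standard basis *)
Definition fmat (B0 B1 : 'M[K]_n) : 'M[K]_n := invmx B0 *m B1.
Definition endo_in (F P : 'M[K]_n) : 'M[K]_n := invmx P *m F *m P.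
(* b-star on the dual: (b-star)^dag = (b^dag)^{-1}, so in the standard dual basis its Gram
   matrix is B^{-1}; the dual basis of P has coordinate columns (P^{-1})^T. *)
Definition dual_gram (B P : 'M[K]_n) : 'M[K]_n := gram (invmx B) (invmx P)^T.

Definition nondeg_sym (B : 'M[K]_n) : Prop := B^T = B /\ B \in unitmx.

Definition A10_setting (B0 B1 E Vb : 'M[K]_n) (eps eta lam : K) : Prop :=
  [/\ nondeg_sym B0, nondeg_sym B1,
      (E \in unitmx /\ endo_in (fmat B0 B1) E = jordan lam),
      gram B0 E = eps *: antidiag &
      Vb \in unitmx /\
      (dual_gram B1 Vb = eta *: antidiag /\
       dual_gram B0 Vb = eta *: (antidiag *m jordan lam))].

Definition Phi (E Vb : 'M[K]_n) : 'M[K]_n := invmx Vb *m E.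

Definition sqrt_coef (l : nat) : K :=
  (\prod_(j < l) (2^-1 - j%:R)) / (l`!)%:R.

Definition A10_series (lam : K) : 'M[K]_n :=
  \sum_(l < n.+1) (sqrt_coef l * lam ^- l) *: (antidiag *m nilpN ^+ l).

End A10Defs.

(* Main.v *)
Require Import Defs.
From HB Require Import structures.
From mathcomp Require Import all_boot all_order all_algebra.
From mathcomp Require Import complex ring lra zify.
Set Implicit Arguments. Unset Strict Implicit. Unset Printing Implicit Defensive.
Import Order.TTheory GRing.Theory Num.Theory.
Local Open Scope ring_scope.

Section Coef.
Variable K : numFieldType.
Local Notation a := (sqrt_coef K).

Lemma natr_neq0 (k : nat) : (k.+1%:R : K) != 0.
Proof. by rewrite pnatr_eq0. Qed.

Lemma fact_neq0 (k : nat) : ((k`!)%:R : K) != 0.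
Proof. by rewrite pnatr_eq0 -lt0n fact_gt0. Qed.

Lemma a0 : a 0 = 1.
Proof. by rewrite /sqrt_coef big_ord0 fact0 divr1. Qed.

Lemma aS l : a l.+1 * l.+1%:R = (2^-1 - l%:R) * a l.
Proof.
rewrite /sqrt_coef big_ord_recr /= factS natrM.
have h1 := natr_neq0 l; have h2 := fact_neq0 l.
field. by rewrite h2 -(natrD _ 1) add1n.
Qed.

Definition conv (m : nat) := \sum_(j < m.+1) a j * a (m - j).

Lemma conv_sym m : 2%:R * \sum_(j < m.+1) j%:R * (a j * a (m - j)) = m%:R * conv m.
Proof.
rewrite mulr_natl mulr2n.
rewrite [X in _ + X = _](reindex_inj rev_ord_inj) /=.
rewrite -big_split /conv mulr_sumr; apply: eq_bigr => j _ /=.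
have hj := ltn_ord j.
rewrite subSS subKn; last by lia.
rewrite natrB; last by lia.
ring.
Qed.

Lemma conv_rec m : m.+1%:R * conv m.+1 = (1 - m%:R) * conv m.
Proof.
have e1 : m.+1%:R * conv m.+1 = 2%:R * \sum_(j < m.+2) j%:R * (a j * a (m.+1 - j)).
  by rewrite conv_sym.
rewrite e1 big_ord_recl /= mul0r add0r.
have e2 : \sum_(i < m.+1) (bump 0 i)%:R * (a (bump 0 i) * a (m.+1 - bump 0 i))
   = \sum_(i < m.+1) (2^-1 - i%:R) * (a i * a (m - i)).
  apply: eq_bigr => i _; rewrite /bump /= add1n subSS.
  by rewrite mulrA [i.+1%:R * _]mulrC aS -!mulrA.
rewrite e2.
have e3 := conv_sym m.
rewrite /conv.
under eq_bigr do rewrite mulrBl.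
rewrite sumrB mulrBr e3 -mulr_sumr.
have -> : \sum_(j < m.+1) sqrt_coef K j * sqrt_coef K (m - j) = conv m by [].
have h2 : (2%:R : K) != 0 by rewrite pnatr_eq0.
by field.
Qed.

Lemma conv_val m : conv m = if (m <= 1)%N then 1 else 0.
Proof.
have c0 : conv 0 = 1 by rewrite /conv big_ord_recl big_ord0 a0 addr0 mulr1.
have c1 : conv 1 = 1.
  have := conv_rec 0; rewrite c0 subr0 mulr1 => <-; by rewrite mul1r.
have c2 : conv 2 = 0.
  have := conv_rec 1; rewrite c1 subrr mulr1 => /eqP; rewrite mulf_eq0 pnatr_eq0 /=.
  by move/eqP.
elim: m => [|m IH] //.
case: m IH => [|m] IH //.
case: m IH => [|m] IH //.
rewrite /= in IH *.
have := conv_rec m.+2; rewrite IH mulr0 => /eqP; rewrite mulf_eq0 pnatr_eq0 /=.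
by move/eqP.
Qed.
End Coef.
Section Mx.
Variable K : numFieldType.
Variable m : nat.
Local Notation n := m.+1.
Local Notation C := (antidiag K n).
Local Notation N := (nilpN K n).

Lemma mulCmx (A : 'M[K]_n) : C *m A = \matrix_(i, j) A (rev_ord i) j.
Proof.
apply/matrixP => i j; rewrite !mxE (bigD1 (rev_ord i)) //= big1 ?addr0.
  rewrite !mxE; have hi := ltn_ord i.
  have -> : (i + (m.+1 - i.+1) == m)%N by apply/eqP; lia.
  by rewrite mul1r.
move=> k hk; rewrite !mxE; case: eqP => h; last by rewrite mul0r.
exfalso; move/eqP: hk; apply; apply/val_inj => /=; lia.
Qed.

Lemma mulmxC (A : 'M[K]_n) : A *m C = \matrix_(i, j) A i (rev_ord j).
Proof.
apply/matrixP => i j; rewrite !mxE (bigD1 (rev_ord j)) //= big1 ?addr0.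
  rewrite !mxE; have hi := ltn_ord j.
  have -> : (m.+1 - j.+1 + j == m)%N by apply/eqP; lia.
  by rewrite mulr1.
move=> k hk; rewrite !mxE; case: eqP => h; last by rewrite mulr0.
exfalso; move/eqP: hk; apply; apply/val_inj => /=; lia.
Qed.

Lemma CC : C *m C = 1%:M.
Proof.
rewrite mulCmx; apply/matrixP => i j; rewrite !mxE /=.
have hi := ltn_ord i; have hj := ltn_ord j.
have -> : (m.+1 - i.+1 + j == m)%N = (i == j) by apply/idP/idP => /eqP h; apply/eqP; [apply/val_inj => /=|move: h => /(congr1 val) /=]; lia.
by [].
Qed.

Lemma trC : C^T = C.
Proof. by apply/matrixP => i j; rewrite !mxE addnC. Qed.

Lemma CNC : C *m N *m C = N^T.
Proof.
rewrite mulmxC mulCmx; apply/matrixP => i j; rewrite !mxE /=.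
have hi := ltn_ord i; have hj := ltn_ord j.
congr ((nat_of_bool _)%:R).
by apply/idP/idP => /eqP h; apply/eqP; lia.
Qed.

Lemma expN l (i j : 'I_n) : (N ^+ l) i j = ((i + l)%N == j :> nat)%:R.
Proof.
elim: l i j => [|l IH] i j.
  by rewrite expr0 !mxE addn0.
rewrite exprSr mxE.
have hi := ltn_ord i; have hj := ltn_ord j.
case: (ltnP (i + l) n) => hl.
  rewrite (bigD1 (Ordinal hl)) //= big1 ?addr0.
    rewrite IH !mxE eqxx mul1r /=.
    by congr ((nat_of_bool _)%:R); apply/idP/idP => /eqP h; apply/eqP; lia.
  move=> k hk; rewrite IH; case: eqP => h; last by rewrite mul0r.
  exfalso; move/eqP: hk; apply; apply/val_inj => /=; lia.
rewrite big1.
  by case: eqP => h //; lia.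
move=> k _; rewrite IH; case: eqP => h; last by rewrite mul0r.
have := ltn_ord k; lia.
Qed.

Lemma Nn : N ^+ n = 0.
Proof.
apply/matrixP => i j; rewrite expN !mxE.
have hj := ltn_ord j; by case: eqP => h //; lia.
Qed.

Lemma CNlC l : C *m N ^+ l *m C = (N ^+ l)^T.
Proof.
elim: l => [|l IH].
  by rewrite expr0 mulmx1 CC trmx1.
rewrite exprS -[N * _]/(N *m _) trmx_mul -IH -CNC.
have -> : N *m N ^+ l = N ^+ l *m N by rewrite mulmxE -exprS exprSr.
by rewrite !mulmxA -[C *m N ^+ l *m C *m C]mulmxA CC mulmx1.
Qed.


Definition polyN (c : nat -> K) : 'M[K]_n := \sum_(l < n) c l *: N ^+ l.

Lemma polyN_entry c (i j : 'I_n) : polyN c i j = if (i <= j)%N then c (j - i)%N else 0.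
Proof.
rewrite /polyN summxE.
have hi := ltn_ord i; have hj := ltn_ord j.
case: leqP => hij.
  have hl : (j - i < n)%N by lia.
  rewrite (bigD1 (Ordinal hl)) //= big1 ?addr0.
    by rewrite mxE expN /= (_ : (i + (j - i) == j)%N) ?mulr1 //; apply/eqP; lia.
  move=> k hk; rewrite mxE expN; case: eqP => h; last by rewrite mulr0.
  exfalso; move/eqP: hk; apply; apply/val_inj => /=; lia.
rewrite big1 // => k _; rewrite mxE expN; case: eqP => h; last by rewrite mulr0.
lia.
Qed.

Lemma polyN_tr c : C *m polyN c *m C = (polyN c)^T.
Proof.
rewrite /polyN mulmx_sumr mulmx_suml raddf_sum; apply: eq_bigr => l _.
by rewrite -scalemxAr -scalemxAl CNlC; apply/matrixP => i j; rewrite !mxE.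
Qed.

Lemma Nl_polyN_comm l c : N ^+ l *m polyN c = polyN c *m N ^+ l.
Proof.
rewrite /polyN mulmx_sumr mulmx_suml; apply: eq_bigr => k _.
by rewrite -scalemxAr -scalemxAl !mulmxE -!exprD addnC.
Qed.

Lemma polyN_comm c d : polyN c *m polyN d = polyN d *m polyN c.
Proof.
rewrite {1}/polyN mulmx_suml [in RHS]/polyN mulmx_sumr; apply: eq_bigr => k _.
by rewrite -scalemxAr -scalemxAl Nl_polyN_comm.
Qed.

Lemma polyNB c d : polyN (fun l => c l - d l) = polyN c - polyN d.
Proof. by rewrite /polyN -sumrB; apply: eq_bigr => l _; rewrite scalerBl. Qed.

Lemma polyND c d : polyN (fun l => c l + d l) = polyN c + polyN d.
Proof. by rewrite /polyN -big_split; apply: eq_bigr => l _; rewrite scalerDl. Qed.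

Lemma polyNZ s c : polyN (fun l => s * c l) = s *: polyN c.
Proof. by rewrite /polyN scaler_sumr; apply: eq_bigr => l _; rewrite scalerA. Qed.

Lemma det_polyN c : \det (polyN c) = c 0%N ^+ n.
Proof.
rewrite -det_tr det_trig.
  under eq_bigr do rewrite mxE polyN_entry leqnn subnn.
  by rewrite prodr_const card_ord.
apply/is_trig_mxP => i j hij; rewrite mxE polyN_entry; case: leqP => //; lia.
Qed.

Lemma polyN00 c : (polyN c *m polyN c) ord0 ord0 = c 0%N ^+ 2.
Proof.
rewrite mxE big_ord_recl big1 ?addr0.
  by rewrite !polyN_entry /= expr2.
by move=> k _; rewrite (polyN_entry c (lift ord0 k)) /= mulr0.
Qed.

Lemma mulmxN_entry (A : 'M[K]_n) i j : (j.+1 < n)%N ->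
  (A *m N) i (inord j.+1) = A i (inord j).
Proof.
move=> hj; rewrite mxE (bigD1 (inord j)) //= big1 ?addr0.
  by rewrite !mxE !inordK ?eqxx ?mulr1 //; lia.
move=> k hk; rewrite !mxE inordK //; case: eqP => h; last by rewrite mulr0.
exfalso; move/eqP: hk; apply; apply/val_inj => /=; rewrite inordK; lia.
Qed.

Lemma mulmxN_entry0 (A : 'M[K]_n) i : (A *m N) i ord0 = 0.
Proof. by rewrite mxE big1 // => k _; rewrite !mxE /= mulr0. Qed.

Lemma mulNmx_entry (A : 'M[K]_n) i j : (i.+1 < n)%N ->
  (N *m A) (inord i) j = A (inord i.+1) j.
Proof.
move=> hi; rewrite mxE (bigD1 (inord i.+1)) //= big1 ?addr0.
  by rewrite !mxE !inordK ?eqxx ?mul1r //; lia.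
move=> k hk; rewrite !mxE inordK; last by lia.
case: eqP => h; last by rewrite mul0r.
exfalso; move/eqP: hk; apply; apply/val_inj => /=; rewrite inordK; lia.
Qed.

Lemma toeplitz (Y : 'M[K]_n) : Y *m N = N *m Y ->
  Y = polyN (fun l => Y ord0 (inord l)).
Proof.
move=> hY.
pose y i j := Y (inord i) (inord j).
have h0 : forall i, (i.+1 < n)%N -> y i.+1 0%N = 0.
  move=> i hi; rewrite /y -mulNmx_entry // -hY.
  by rewrite (_ : inord 0 = ord0) ?mulmxN_entry0 //; apply/val_inj; rewrite /= inordK.
have hS : forall i j, (i.+1 < n)%N -> (j.+1 < n)%N -> y i.+1 j.+1 = y i j.
  move=> i j hi hj; rewrite /y -mulNmx_entry // -hY mulmxN_entry //.
have claim : forall i j, (i < n)%N -> (j < n)%N ->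
    y i j = if (i <= j)%N then y 0%N (j - i)%N else 0.
  elim=> [|i IH] j hi hj; first by rewrite subn0.
  case: j hj => [|j] hj; first by rewrite h0.
  rewrite hS // IH; [|lia|lia].
  by rewrite ltnS subSS.
apply/matrixP => i j; rewrite polyN_entry.
have := claim i j (ltn_ord i) (ltn_ord j); rewrite /y !inord_val => ->.
by rewrite (_ : inord 0 = ord0) //; apply/val_inj; rewrite /= inordK.
Qed.


Lemma hornerN (x : 'M[K]_n) (E : nat -> K) k :
  horner_mx x (\poly_(i < k) E i) = \sum_(i < k) E i *: x ^+ i.
Proof.
rewrite poly_def rmorph_sum; apply: eq_bigr => i _.
apply: (etrans (horner_mxZ x (E i) _)); by rewrite rmorphXn /= horner_mx_X.
Qed.

Lemma Nge l : (n <= l)%N -> N ^+ l = 0.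
Proof. by move=> hl; rewrite -(subnK hl) exprD Nn mulr0. Qed.

Lemma T2 (lam : K) :
  let x := lam^-1 *: N in
  let T := \sum_(l < n) sqrt_coef K l *: x ^+ l in
  T *m T = 1%:M + x.
Proof.
move=> x T.
pose p := \poly_(l < n) sqrt_coef K l.
have hT : T = horner_mx x p by rewrite hornerN.
pose q := p * p.
have hq : q = \poly_(i < (size q).+2) q`_i.
  apply/polyP => i; rewrite coef_poly; case: ltnP => // h.
  by rewrite nth_default //; apply: ltnW; exact: ltnW h.
have qc : forall i, (i < n)%N -> q`_i = conv K i.
  move=> i hi; rewrite coefM /conv; apply: eq_bigr => j _.
  have h1 : (j < n)%N by have := ltn_ord j; lia.
  have h2 : (i - j < n)%N by lia.
  by rewrite /p !coef_poly h1 h2.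
have -> : T *m T = horner_mx x q by rewrite hT mulmxE rmorphM.
rewrite hq hornerN !big_ord_recl /= big1 ?addr0.
  rewrite expr0 expr1.
  rewrite qc // conv_val /= scale1r; congr (_ + _).
  case: (ltnP 1 n) => h1.
    by rewrite qc // conv_val /= scale1r.
  by rewrite /x -[N]expr1 Nge // !scaler0.
move=> i _ /=.
case: (ltnP i.+2 n) => h.
  by rewrite qc // conv_val /= scale0r.
by rewrite /x exprZn Nge // !scaler0.
Qed.

End Mx.

Lemma main (K : numFieldType) (m : nat) (B0 B1 E Vb : 'M[K]_m.+1) (eps eta lam : K) :
  eps ^+ 2 = 1 -> eta ^+ 2 = 1 -> A10_setting B0 B1 E Vb eps eta lam ->
  (exists y0 : K, y0 != 0 /\ y0 ^+ 2 = eps * eta * lam) /\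
  (forall s : K, s ^+ 2 = eps * eta * lam ->
     Phi E Vb = s *: A10_series m.+1 lam \/ Phi E Vb = - (s *: A10_series m.+1 lam)).
Proof.
move=> he ht [[sB0 uB0] [sB1 uB1] [uE hJ] hG0 [uV [hD1 hD0]]].
set J := jordan m.+1 lam in hJ hD0 *.
set C := antidiag K m.+1 in hG0 hD1 hD0 *. set N := nilpN K m.+1.
set k := eps * eta.
have hk : k * k = 1 by rewrite /k mulrACA -!expr2 he ht mulr1.
have hBE : B1 *m E = B0 *m E *m J.
  by rewrite -hJ /endo_in /fmat !mulmxA (mulmxK uE) (mulmxV uB0) mul1mx.
have hG1 : E^T *m B1 *m E = eps *: (C *m J).
  by rewrite -mulmxA hBE !mulmxA -[E^T *m B0 *m E]/(gram B0 E) hG0 scalemxAl.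
have hG0' : E^T *m B0 *m E = eps *: C := hG0.
have e1 : E *m C *m E^T *m B0 = eps%:M.
  transitivity (E *m C *m (E^T *m B0 *m E) *m invmx E); first by rewrite !mulmxA (mulmxK uE).
  rewrite hG0' -scalemxAr -scalemxAl -(mulmxA E) CC mulmx1 (mulmxV uE).
  by rewrite scale_scalar_mx mulr1.
have hinvB0 : invmx B0 = eps *: (E *m C *m E^T).
  have e2 : eps *: (E *m C *m E^T) *m B0 = 1%:M.
    by rewrite -scalemxAl e1 scale_scalar_mx -expr2 he.
  by rewrite -[invmx B0]mul1mx -e2 -(mulmxA _ B0) (mulmxV uB0) mulmx1.
have hD1' : invmx Vb *m invmx B1 *m (invmx Vb)^T = eta *: C.
  by rewrite -hD1 /dual_gram /gram trmxK.
have hD0' : invmx Vb *m invmx B0 *m (invmx Vb)^T = eta *: (C *m J).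
  by rewrite -hD0 /dual_gram /gram trmxK.
have hV1 : Vb^T *m B1 *m Vb = eta *: C.
  have e3 : (invmx Vb *m invmx B1 *m (invmx Vb)^T) *m (Vb^T *m B1 *m Vb) = 1%:M.
    rewrite -!mulmxA (mulmxA (invmx Vb)^T) -trmx_mul (mulmxV uV) trmx1 mul1mx.
    by rewrite (mulKmx uB1) (mulVmx uV).
  rewrite hD1' in e3.
  have eC : (eta *: C) *m (eta *: C) = 1%:M.
    by rewrite -scalemxAl -scalemxAr scalerA -expr2 ht scale1r CC.
  by rewrite -[Vb^T *m B1 *m Vb]mul1mx -eC -mulmxA e3 mulmx1.
set X := invmx Vb *m E.
have hEV : E = Vb *m X by rewrite /X (mulKVmx uV).
have e4 : E^T *m B1 *m E = eta *: (X^T *m C *m X).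
  rewrite [in LHS]hEV trmx_mul.
  transitivity (X^T *m (Vb^T *m B1 *m Vb) *m X); first by rewrite !mulmxA.
  by rewrite hV1 -scalemxAr -scalemxAl.
have hXa : X^T *m C *m X = k *: (C *m J).
  by rewrite -[X^T *m C *m X]scale1r -ht expr2 -scalerA -e4 hG1 scalerA /k [eta * eps]mulrC.
have e5 : invmx Vb *m invmx B0 *m (invmx Vb)^T = eps *: (X *m C *m X^T).
  rewrite hinvB0 /X trmx_mul -scalemxAr -scalemxAl; congr (_ *: _); by rewrite !mulmxA.
have hXb : X *m C *m X^T = k *: (C *m J).
  by rewrite -[X *m C *m X^T]scale1r -he expr2 -scalerA -e5 hD0' scalerA.
have hPhi : Phi E Vb = X by [].
clearbody X.
have CJC : C *m J *m C = J^T.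
  rewrite /J /jordan mulmxDr mulmxDl mul_mx_scalar -scalemxAl CC CNC.
  by rewrite scale_scalar_mx mulr1 linearD /= tr_scalar_mx.
have hCJ : C *m J = k *: (X^T *m C *m X) by rewrite hXa scalerA hk scale1r.
have hJ1 : J = k *: (C *m X^T *m C *m X).
  by rewrite -[J]mul1mx -CC -mulmxA hCJ -scalemxAr !mulmxA.
have hXJ : X *m J = J^T *m X.
  rewrite {1}hJ1 -scalemxAr !mulmxA hXb -!scalemxAl scalerA hk scale1r.
  by rewrite CJC.
set Y := C *m X.
have hYJ : Y *m J = J *m Y.
  by rewrite /Y -mulmxA hXJ -CJC !mulmxA CC mul1mx.
have hYN : Y *m N = N *m Y.
  by move: hYJ; rewrite /J /jordan mulmxDr mulmxDl scalar_mxC => /addrI.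
pose y := fun l => Y ord0 (inord l).
have hY : Y = polyN m y by apply: toeplitz.
have hXC : X = C *m Y by rewrite /Y mulmxA CC mul1mx.
clearbody Y.
have hXT : X^T = C *m Y.
  rewrite hXC trmx_mul trC hY -polyN_tr -hY.
  by rewrite -(mulmxA (antidiag K m.+1 *m Y)) CC mulmx1.
have e6 : C *m (Y *m Y) = C *m (k *: J).
  rewrite -scalemxAr -hXa hXT hXC !mulmxA -(mulmxA (C *m Y)) CC mulmx1.
  by [].
have hYY : Y *m Y = k *: J.
  by rewrite -[Y *m Y]mul1mx -CC -mulmxA e6 mulmxA CC mul1mx.
have uJ : J \in unitmx.
  by rewrite -hJ /endo_in /fmat !unitmx_mul !unitmx_inv uE uB0 uB1.
have k0 : k != 0.
  by apply/eqP => h; move: hk; rewrite h mul0r => /eqP; rewrite eq_sym oner_eq0.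
have uY : Y \in unitmx.
  have : Y *m Y \in unitmx.
    by rewrite hYY unitmxE detZ unitrM unitrX ?unitfE // /= -unitfE -unitmxE.
  by move=> h; move: h; rewrite (unitmx_mul Y Y) => /andP [].
have y00 : y 0%N != 0.
  by move: uY; rewrite unitmxE hY det_polyN unitfE expf_eq0 /=.
have y0sq : y 0%N ^+ 2 = k * lam.
  have := congr1 (fun M : 'M[K]_m.+1 => M ord0 ord0) hYY; rewrite /= {1 2}hY polyN00 => ->.
  by rewrite /J /jordan !mxE eqxx /= mulr1n addr0.
split; first by exists (y 0%N).
move=> s hs.
have lam0 : lam != 0.
  by apply/eqP => h; move: y00; rewrite -sqrf_eq0 y0sq h mulr0 eqxx.
set T := \sum_(l < m.+1) sqrt_coef K l *: (lam^-1 *: N) ^+ l.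
have hTT : T *m T = 1%:M + lam^-1 *: N by exact: T2.
pose t := fun l => sqrt_coef K l * lam ^- l.
have hTp : T = polyN m t.
  by rewrite /T /polyN; apply: eq_bigr => l _; rewrite exprZn scalerA exprVn.
pose z := fun l => s * t l.
set Z := s *: T.
have hZ : Z = polyN m z by rewrite /Z hTp -polyNZ.
have hZZ : Z *m Z = k *: J.
  rewrite /Z -scalemxAl -scalemxAr scalerA -expr2 hs hTT /J /jordan.
  by rewrite !scalerDr !scale_scalar_mx !scalerA mulr1 mulfK.
have z0 : z 0%N = s by rewrite /z /t a0 expr0 invr1 !mulr1.
have hYZc : Y *m Z = Z *m Y by rewrite hY hZ polyN_comm.
have hDP : (Y - Z) *m (Y + Z) = 0.
  by rewrite mulmxDr !mulmxBl hYY hZZ hYZc addrA subrK subrr.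
have hPD : (Y + Z) *m (Y - Z) = 0.
  by rewrite mulmxBr !mulmxDl hYY hZZ hYZc [Z *m Y + _]addrC subrr.
have hD : Y - Z = polyN m (fun l => y l - z l) by rewrite polyNB -hY -hZ.
have hP : Y + Z = polyN m (fun l => y l + z l) by rewrite polyND -hY -hZ.
have s0 : s != 0.
  by apply/eqP => h; move: y00; rewrite -sqrf_eq0 y0sq -hs h expr2 mulr0 eqxx.
have s2 : s + s != 0 by rewrite -mulr2n mulrn_eq0 negb_or /= s0.
have hser : A10_series m.+1 lam = C *m T.
  rewrite /A10_series big_ord_recr /= Nn mulmx0 scaler0 addr0 /T mulmx_sumr.
  apply: eq_bigr => l _; rewrite exprZn scalerA -scalemxAr exprVn.
  by rewrite mulrC.
have hCZ : Phi E Vb = C *m Y by rewrite hPhi hXC.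
have : (y 0%N - s) * (y 0%N + s) = 0 by rewrite -subr_sqr y0sq hs subrr.
move/eqP; rewrite mulf_eq0 => /orP [] /eqP h.
  left.
  have uP : Y + Z \in unitmx.
    rewrite unitmxE hP det_polyN unitfE expf_eq0 /= z0.
    by move/eqP: h; rewrite subr_eq0 => /eqP ->.
  have : Y - Z = 0 by rewrite -(mulmxK uP (Y - Z)) hDP mul0mx.
  move/eqP; rewrite subr_eq0 => /eqP hYZ.
  by rewrite hCZ hYZ /Z hser -scalemxAr.
right.
have uD : Y - Z \in unitmx.
  rewrite unitmxE hD det_polyN unitfE expf_eq0 /= z0.
  move/eqP: h; rewrite addr_eq0 => /eqP ->.
  by rewrite -opprD oppr_eq0.
have : Y + Z = 0 by rewrite -(mulmxK uD (Y + Z)) hPD mul0mx.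
move/eqP; rewrite addr_eq0 => /eqP hYZ.
by rewrite hCZ hYZ /Z hser mulmxN -scalemxAr.
Qed.

Lemma sq_of_in (R : numFieldType) (e : R) : e \in [:: 1; -1] -> e ^+ 2 = 1.
Proof. by rewrite !inE => /orP [] /eqP ->; rewrite ?sqrrN expr1n. Qed.

Theorem lemmaA10 :
  (* K = R (any real closed field, e.g. the reals), c = {1, -1} *)
  (forall (R : rcfType) (n : nat) (B0 B1 E Vb : 'M[R]_n) (eps eta lam : R),
     (0 < n)%N ->
     eps \in [:: 1; -1] -> eta \in [:: 1; -1] ->
     A10_setting B0 B1 E Vb eps eta lam ->
     0 < eps * eta * lam /\
     (forall s : R, s ^+ 2 = eps * eta * lam ->
        Phi E Vb = s *: A10_series n lam \/ Phi E Vb = - (s *: A10_series n lam)))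
  /\
  (* K = C = R[i], c = {1} *)
  (forall (R : rcfType) (n : nat) (B0 B1 E Vb : 'M[R[i]]_n) (eps eta lam : R[i]),
     (0 < n)%N ->
     eps = 1 -> eta = 1 ->
     A10_setting B0 B1 E Vb eps eta lam ->
     (forall s : R[i], s ^+ 2 = eps * eta * lam ->
        Phi E Vb = s *: A10_series n lam \/ Phi E Vb = - (s *: A10_series n lam))).
Proof.
split.
  move=> R [//|m] B0 B1 E Vb eps eta lam _ he ht hS.
  have [[y0 [y00 hy]] H] := main (sq_of_in he) (sq_of_in ht) hS.
  split=> //.
  by rewrite -hy exprn_even_gt0 //= y00 orbT.
move=> R [//|m] B0 B1 E Vb eps eta lam _ he ht hS.
have he' : eps ^+ 2 = 1 by rewrite he expr1n.
have ht' : eta ^+ 2 = 1 by rewrite ht expr1n.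
by have [_ H] := main he' ht' hS.
Qed.
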